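(* Suppose $K$ and $t=KM/N$ are both even, with $2\le t\le K$. Then the D2D coded caching rate $R=N/M-1$ is achievable with some subpacketization $F$ satisfying $F\le \tfrac12 F_{\rm JCM}$.
   Context: D2D coded caching setting: there are $N\ge 1$ files $W_1,\dots,W_N$ and $K\ge 2$ users, each with a cache of size $M$ files, $0<M\le N$, and $t:=KM/N$ is assumed to be a positive integer. A D2D coded caching scheme with (uncoded placement and) subpacketization $F\in\mathbb{N}_+$ is defined as follows. Fix a packet size $b\ge 1$; each file is a sequence of $F$ packets $W_n=(W_n^{(1)},\dots,W_n^{(F)})$, $W_n^{(j)}\in\{0,1\}^b$. Placement: each user $k\in[K]$ stores the packets $\{W_n^{(j)}:(n,j)\in Z_k\}$ for a fixed index set $Z_k\subseteq[N]\times[F]$ with $|Z_k|\le MF$ (independent of demands and file contents). Delivery: for every demand vector $\mathbf d=(d_1,\dots,d_K)\in[N]^K$, each user $k$ broadcasts to all other users $\ell_k(\mathbf d)\in\mathbb{N}$ blocks in $\{0,1\}^b$, each a deterministic function of the packets stored by user $k$; it is required that for all file contents each user $k$ can recover all $F$ packets of $W_{d_k}$ from its stored packets and the blocks sent by the other users. The rate is $R=\max_{\mathbf d}\frac{1}{F}\sum_{k=1}^K\ell_k(\mathbf d)$ (transmitted bits normalized by the file size $Fb$). The rate $R$ is achievable with subpacketization $F$ if such a scheme with rate $R$ exists for every packet size $b\ge 1$. Define $F_{\rm JCM}:=t\binom{K}{t}$. *)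

(* Defs.v *)
From HB Require Import structures.
From mathcomp Require Import all_boot all_order all_algebra.
Set Implicit Arguments. Unset Strict Implicit. Unset Printing Implicit Defensive.
Import Order.TTheory GRing.Theory Num.Theory.

Definition block (b : nat) := b.-tuple bool.

(* file contents: W n j = j-th packet of file W_n *)
Definition library (N F b : nat) := 'I_N -> 'I_F -> block b.

Definition demand (N K : nat) := {ffun 'I_K -> 'I_N}.

Definition agree_on (N F b : nat) (Z : {set 'I_N * 'I_F}) (W W' : library N F b) :=
  forall n j, (n, j) \in Z -> W n j = W' n j.

(* A D2D coded caching scheme with uncoded placement, subpacketization F,
   packet size b, cache size M (in files). *)
Unset Implicit Arguments.
Record d2d_scheme (N K F b : nat) (M : rat) := D2DScheme {
  placement : 'I_K -> {set 'I_N * 'I_F};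
  nblocks : 'I_K -> demand N K -> nat;
  transmit : forall (k : 'I_K) (d : demand N K),
      library N F b -> 'I_(nblocks k d) -> block b;
  decode : forall (k : 'I_K) (d : demand N K),
      library N F b -> (forall j : 'I_K, 'I_(nblocks j d) -> block b) ->
      'I_F -> block b;
  cache_size : forall k, ((#|placement k|)%:R <= M * F%:R :> rat)%R;
  transmit_local : forall (k : 'I_K) (d : demand N K) (W W' : library N F b),
      agree_on (placement k) W W' -> transmit k d W =1 transmit k d W';
  decode_local : forall (k : 'I_K) (d : demand N K) (W W' : library N F b) (m m' : forall j : 'I_K, 'I_(nblocks j d) -> block b),
      agree_on (placement k) W W' ->
      (forall j, j != k -> m j =1 m' j) ->
      decode k d W m =1 decode k d W' m';
  decode_correct : forall (k : 'I_K) (d : demand N K) (W : library N F b),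
      decode k d W (fun j => transmit j d W) =1 W (d k)
}.

Arguments placement {N K F b M}.
Arguments nblocks {N K F b M}.
Arguments transmit {N K F b M}.
Arguments decode {N K F b M}.

Definition d2d_rate (N K F b : nat) (M : rat) (S : d2d_scheme N K F b M) : rat :=
  ((\max_(d : demand N K) \sum_(k < K) nblocks S k d)%N%:R / F%:R)%R.

Definition achievable_with (N K : nat) (M R : rat) (F : nat) : Prop :=
  (0 < F)%N /\
  forall b : nat, (0 < b)%N -> exists S : d2d_scheme N K F b M, d2d_rate N K F b M S = R.

Definition F_JCM (K t : nat) : nat := t * 'C(K, t).

(* Main.v *)
From HB Require Import structures.
Require Import Defs.
From mathcomp Require Import all_boot all_order all_algebra.
Import Order.TTheory GRing.Theory Num.Theory.

Section Xor.
Variable b : nat.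
Definition bzero : block b := [tuple false | i < b].
Definition bxor (u v : block b) : block b := [tuple addb (tnth u i) (tnth v i) | i < b].
Lemma tnth_bxor u v i : tnth (bxor u v) i = addb (tnth u i) (tnth v i).
Proof. by rewrite tnth_mktuple. Qed.
Lemma bxorA : associative bxor.
Proof. by move=> u v w; apply: eq_from_tnth => i; rewrite !tnth_bxor addbA. Qed.
Lemma bxorC : commutative bxor.
Proof. by move=> u v; apply: eq_from_tnth => i; rewrite !tnth_bxor addbC. Qed.
Lemma bxor0l : left_id bzero bxor.
Proof. by move=> u; apply: eq_from_tnth => i; rewrite !tnth_bxor tnth_mktuple. Qed.
Lemma bxorK u v : bxor u (bxor u v) = v.
Proof. by apply: eq_from_tnth => i; rewrite !tnth_bxor addKb. Qed.
Lemma bxorvv u : bxor u u = bzero.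
Proof. by apply: eq_from_tnth => i; rewrite !tnth_bxor addbb tnth_mktuple. Qed.
Lemma bxor0r u : bxor u bzero = u.
Proof. by rewrite bxorC bxor0l. Qed.
HB.instance Definition _ := Monoid.isComLaw.Build (block b) bzero bxor bxorA bxorC bxor0l.
End Xor.
Section Generic.
Variables (N K : nat) (M : rat) (P X : finType).
Variables (c : 'I_K -> P -> bool) (snd : X -> 'I_K) (g : X -> 'I_K -> option P).
Hypothesis H1 : forall x r q, g x r = Some q -> c (snd x) q && ~~ c r q.
Hypothesis H2 : forall x r r' q q', g x r = Some q -> g x r' = Some q' -> r != r' -> c r q'.
Hypothesis H3 : forall k q, ~~ c k q -> exists x, g x k = Some q.
Hypothesis Hc : forall k, ((N * #|[set q | c k q]|)%:R <= M * #|P|%:R :> rat)%R.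
Variable b : nat.

Local Notation F := #|P|.
Definition Xs (k : 'I_K) := [set x | snd x == k].
Lemma inXs x : x \in Xs (snd x). Proof. by rewrite inE. Qed.
Definition plc (k : 'I_K) : {set 'I_N * 'I_F} := [set nj | c k (enum_val nj.2)].
Definition nbl (k : 'I_K) (d : demand N K) := #|Xs k|.
Definition term (d : demand N K) (W : library N F b) (x : X) (r : 'I_K) : block b :=
  if g x r is Some q then W (d r) (enum_rank q) else bzero b.
Definition trm k d W (i : 'I_(nbl k d)) : block b :=
  \big[bxor b/bzero b]_(r : 'I_K) term d W (enum_val (A := Xs k) i) r.
Definition dec k d (W : library N F b) (m : forall j : 'I_K, 'I_(nbl j d) -> block b) (j : 'I_F) : block b :=
  if c k (enum_val j) then W (d k) j else
  if [pick x | g x k == Some (enum_val j)] is Some x then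
     bxor b (m (snd x) (enum_rank_in (inXs x) x)) (\big[bxor b/bzero b]_(r | r != k) term d W x r)
  else bzero b.

Lemma plcP k n j : ((n, j) \in plc k) = c k (enum_val j).
Proof. by rewrite inE. Qed.

Lemma trm_local k d (W W' : library N F b) :
  agree_on (plc k) W W' -> trm k d W =1 trm k d W'.
Proof.
move=> Ha i; rewrite /trm; apply: eq_bigr => r _; rewrite /term.
case E: (g _ r) => [q|] //; apply: Ha; rewrite plcP enum_rankK.
have := enum_valP i; rewrite inE => /eqP <-.
by case/andP: (H1 _ _ _ E).
Qed.

Lemma dec_local k d (W W' : library N F b) (m m' : forall j : 'I_K, 'I_(nbl j d) -> block b) :
  agree_on (plc k) W W' -> (forall j, j != k -> m j =1 m' j) ->
  dec k d W m =1 dec k d W' m'.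
Proof.
move=> Ha Hm j; rewrite /dec.
case: ifP => Hck; first by apply: Ha; rewrite plcP.
case: pickP => [x /eqP Ex|] //.
case/andP: (H1 _ _ _ Ex) => Hs Hk.
have Hne : snd x != k by apply: contraNneq Hk => <-.
rewrite (Hm _ Hne); congr bxor; apply: eq_bigr => r Hr; rewrite /term.
case E: (g x r) => [q|] //; apply: Ha; rewrite plcP enum_rankK.
by apply: (H2 _ _ _ _ _ Ex E); rewrite eq_sym.
Qed.

Lemma dec_correct k d (W : library N F b) :
  dec k d W (fun j => trm j d W) =1 W (d k).
Proof.
move=> j; rewrite /dec.
case: ifP => Hck //.
case: pickP => [x /eqP Ex|Hn]; last first.
  have [x Ex] := H3 _ _ (negbT Hck); by have := Hn x; rewrite Ex eqxx.
rewrite /trm enum_rankK_in ?inXs //.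
rewrite (bigD1 k) //=.
rewrite -bxorA bxorvv bxor0r.
by rewrite /term Ex enum_valK.
Qed.
Lemma card_plc k : #|plc k| = N * #|[set q | c k q]|.
Proof.
have -> : plc k = setX [set: 'I_N] [set j | c k (enum_val j)].
  by apply/setP => -[n j]; rewrite !inE.
rewrite cardsX cardsT card_ord; congr (_ * _).
rewrite -(card_imset _ (@enum_val_inj _ _)); apply: eq_card => q.
rewrite inE; apply/imsetP/idP => [[j]|Hq]; first by rewrite inE => H ->.
by exists (enum_rank q); rewrite ?inE enum_rankK.
Qed.

Lemma sum_Xs : \sum_(k < K) #|Xs k| = #|X|.
Proof.
rewrite -sum1_card (partition_big snd xpredT) //=.
by apply: eq_bigr => k _; rewrite -sum1_card; apply: eq_bigl => x; rewrite inE.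
Qed.

Lemma generic_rate (HN : (0 < N)%N) :
  exists S : d2d_scheme N K F b M, d2d_rate N K F b M S = (#|X|%:R / F%:R)%R.
Proof.
have cs : forall k, ((#|plc k|)%:R <= M * F%:R :> rat)%R.
  by move=> k; rewrite card_plc.
exists (@D2DScheme N K F b M plc nbl trm dec cs trm_local dec_local dec_correct).
rewrite /d2d_rate /=; congr (_%:R / _)%R.
have d0 : demand N K := [ffun=> Ordinal HN].
apply/eqP; rewrite eqn_leq; apply/andP; split.
  by apply/bigmax_leqP => d _; rewrite /nbl sum_Xs.
by rewrite -sum_Xs (leq_bigmax d0).
Qed.
Lemma count_XP (t : nat)
  (Hrecv : forall x, #|[set r | g x r != None]| = t)
  (Hcq : forall q, #|[set k | c k q]| = t)
  (Hinj : forall x x' r q, g x r = Some q -> g x' r = Some q -> x = x') :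
  t * #|X| = (K - t) * #|P|.
Proof.
have E1 : t * #|X| = \sum_(r < K) #|[set x | g x r != None]|.
  rewrite mulnC -sum_nat_const.
  rewrite (eq_bigr (fun x => \sum_(r < K) (g x r != None : nat))); last first.
    by move=> x _; rewrite -(Hrecv x) -sum1_card big_mkcond /=; apply: eq_bigr => r _; rewrite inE.
  rewrite exchange_big /=; apply: eq_bigr => r _; rewrite -sum1_card [in RHS]big_mkcond /=.
  by apply: eq_bigr => x _; rewrite !inE; case: (g x r).
have E2 : forall r, #|[set x | g x r != None]| = #|[set q | ~~ c r q]|.
  move=> r.
  have -> : [set x | g x r != None] = [set x | g x r \in Some @: [set q | ~~ c r q]].
    apply/setP => x; rewrite !inE; case E: (g x r) => [q|] /=.
      by apply/esym/imsetP; exists q => //; rewrite inE; case/andP: (H1 _ _ _ E).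
    by apply/esym/imsetP => -[].
  set S' := Some @: _.
  have inj : {in [set x | g x r \in S'] &, injective (fun x => g x r)}.
    move=> x y; rewrite !inE => /imsetP [q _ Eq] _ E.
    by apply: (Hinj _ _ r q) => //; rewrite -E.
  transitivity #|S'|; last exact: card_imset _ Some_inj.
  apply/eqP; rewrite eqn_leq; apply/andP; split.
    rewrite -(card_in_imset inj).
    by apply: subset_leq_card; apply/subsetP => y /imsetP [x]; rewrite inE => H ->.
  rewrite -(card_in_imset inj).
  apply: subset_leq_card; apply/subsetP => _ /imsetP [q Hq ->].
  have Hq' : ~~ c r q by move: Hq; rewrite inE.
  have [x Ex] := H3 _ _ Hq'.
  apply/imsetP; exists x => //; rewrite inE Ex; apply/imsetP; by exists q.
rewrite E1.
have E3 : forall r, #|[set q | ~~ c r q]| = \sum_q (~~ c r q : nat).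
  by move=> r; rewrite -sum1_card big_mkcond /=; apply: eq_bigr => q _; rewrite inE; case: (c r q).
under eq_bigr => r _ do rewrite E2 E3.
rewrite exchange_big /= (eq_bigr (fun _ => K - t)); first by rewrite sum_nat_const mulnC.
move=> q _.
have E4 : \sum_(r < K) (~~ c r q : nat) = #|~: [set k | c k q]|.
  by rewrite -sum1_card [in RHS]big_mkcond /=; apply: eq_bigr => r _; rewrite !inE; case: (c r q).
by rewrite E4 cardsCs setCK card_ord Hcq.
Qed.
End Generic.
From mathcomp Require Import zify.
Section Inst.
Variables (K t h s : nat).
Hypothesis HK : K = h + h.
Hypothesis Ht : t = s + s.
Hypothesis Hh : (0 < h)%N.

Definition Aset : {set 'I_K} := [set i : 'I_K | i < h].
Definition side (T : {set 'I_K}) : {set 'I_K} :=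
  if #|T :&: Aset| <= #|T :&: ~: Aset| then Aset else ~: Aset.
Definition pP (x : {set 'I_K} * 'I_K) := (#|x.1| == t) && (x.2 \in x.1 :&: side x.1).
Definition pX (x : {set 'I_K} * 'I_K) := (#|x.1| == t.+1) && (x.2 \in x.1 :&: side x.1).
Definition Pt := {x : {set 'I_K} * 'I_K | pP x}.
Definition Xt := {x : {set 'I_K} * 'I_K | pX x}.

Definition rho (T : {set 'I_K}) (u : 'I_K) : 'I_K :=
  nth u (enum (T :&: Aset)) (index u (enum (T :&: ~: Aset))).

Lemma cardAB (T : {set 'I_K}) : #|T :&: Aset| + #|T :&: ~: Aset| = #|T|.
Proof. by rewrite -setDE cardsID. Qed.

Lemma AnotB : Aset != ~: Aset.
Proof.
have h0 : (0 < K)%N by rewrite HK; lia.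
apply/negP => /eqP E; have : Ordinal h0 \in Aset by rewrite inE.
by rewrite E !inE /= Hh.
Qed.

Section Rho.
Variable T : {set 'I_K}.
Hypothesis Heq : #|T :&: Aset| = #|T :&: ~: Aset|.
Lemma rho_in u : u \in T :&: ~: Aset -> rho T u \in T :&: Aset.
Proof.
move=> Hu; rewrite /rho -mem_enum; apply: mem_nth.
by rewrite -cardE Heq cardE index_mem mem_enum.
Qed.
Lemma rho_inj u v : u \in T :&: ~: Aset -> v \in T :&: ~: Aset -> rho T u = rho T v -> u = v.
Proof.
move=> Hu Hv; rewrite /rho.
have iu : (index u (enum (T :&: ~: Aset)) < size (enum (T :&: Aset)))%N.
  by rewrite -cardE Heq cardE index_mem mem_enum.
have iv : (index v (enum (T :&: ~: Aset)) < size (enum (T :&: Aset)))%N.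
  by rewrite -cardE Heq cardE index_mem mem_enum.
rewrite [nth v _ _](set_nth_default u _ iv) => /eqP; rewrite nth_uniq ?enum_uniq // => /eqP E.
have := congr1 (nth u (enum (T :&: ~: Aset))) E.
by rewrite !nth_index ?mem_enum.
Qed.
Lemma rho_surj l : l \in T :&: Aset -> exists2 u, u \in T :&: ~: Aset & rho T u = l.
Proof.
move=> Hl; set u := nth l (enum (T :&: ~: Aset)) (index l (enum (T :&: Aset))).
have il : (index l (enum (T :&: Aset)) < size (enum (T :&: ~: Aset)))%N.
  by rewrite -cardE -Heq cardE index_mem mem_enum.
have Hu : u \in T :&: ~: Aset by rewrite -mem_enum mem_nth.
exists u => //; rewrite /rho index_uniq ?enum_uniq //.
by rewrite nth_index // mem_enum.
Qed.
End Rho.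

Lemma cardD1I (S X : {set 'I_K}) r : r \in S ->
  #|S :&: X| = (r \in X) + #|(S :\ r) :&: X|.
Proof.
move=> Hr; rewrite (cardsD1 r (S :&: X)) inE Hr /=; congr (_ + _).
by apply: eq_card => y; rewrite !inE; case: (y == r); rewrite ?andbF.
Qed.

Lemma side_cases (S : {set 'I_K}) r : #|S| = t.+1 -> r \in S ->
  side (S :\ r) = side S \/
  [/\ side S = ~: Aset, side (S :\ r) = Aset, r \in Aset &
      #|(S :\ r) :&: Aset| = #|(S :\ r) :&: ~: Aset|].
Proof.
move=> HS Hr.
have E1 := cardD1I S Aset r Hr; have E2 := cardD1I S (~: Aset) r Hr.
have E3 := cardAB S.
rewrite inE in E2.
rewrite /side; move: E1 E2 E3 HS.
set a := #|S :&: Aset|; set b := #|S :&: ~: Aset|.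
set a' := #|(S :\ r) :&: Aset|; set b' := #|(S :\ r) :&: ~: Aset|.
case HA: (r \in Aset) => /= E1 E2 E3 HS;
case: (leqP a b) => H1; case: (leqP a' b') => H2;
  try (by left); try (by right; split => //; lia); try (exfalso; lia).
Qed.

Definition lbl (S : {set 'I_K}) (r u : 'I_K) :=
  if side (S :\ r) == side S then u else rho (S :\ r) u.
Definition gt (x : Xt) (r : 'I_K) : option Pt :=
  if (r \in (val x).1) && (r != (val x).2)
  then insub ((val x).1 :\ r, lbl (val x).1 r (val x).2) else None.
Definition ct (k : 'I_K) (q : Pt) := k \in (val q).1.
Definition sndt (x : Xt) := (val x).2.

Lemma cardD1' (S : {set 'I_K}) r : r \in S -> #|S :\ r| = #|S|.-1.
Proof. by move=> Hr; rewrite (cardsD1 r S) Hr. Qed.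

Lemma lbl_ok (S : {set 'I_K}) (r u : 'I_K) : #|S| = t.+1 -> r \in S -> u \in S :&: side S -> u != r ->
  pP (S :\ r, lbl S r u).
Proof.
move=> HS Hr Hu Hur; rewrite /pP /= cardD1' // HS eqxx /=.
case: (side_cases S r HS Hr) => [E | [E1 E2 HA Heq]].
  by rewrite /lbl E eqxx; move: Hu; rewrite !inE Hur.
rewrite /lbl E1 E2 (negbTE AnotB); apply: rho_in => //.
by move: Hu; rewrite E1 !inE Hur.
Qed.

Lemma gtP (x : Xt) (r : 'I_K) (q : Pt) : gt x r = Some q ->
  [/\ r \in (val x).1, r != (val x).2 & val q = ((val x).1 :\ r, lbl (val x).1 r (val x).2)].
Proof.
rewrite /gt; case: ifP => // /andP [H1 H2]; case: insubP => // q' _ Hv [<-].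
by split.
Qed.

Lemma gt_some (x : Xt) (r : 'I_K) : r \in (val x).1 -> r != (val x).2 ->
  exists q, gt x r = Some q /\ val q = ((val x).1 :\ r, lbl (val x).1 r (val x).2).
Proof.
move=> H1 H2; rewrite /gt H1 H2 /=.
case: x H1 H2 => [[S u] /= /andP [/eqP HS Hu]] H1 H2.
rewrite insubT; first by apply: lbl_ok => //; rewrite eq_sym.
by move=> Hp; eexists; split.
Qed.

Lemma gt_H1 (x : Xt) (r : 'I_K) (q : Pt) : gt x r = Some q -> ct (sndt x) q && ~~ ct r q.
Proof.
case/gtP => H1 H2 Hv; rewrite /ct /sndt Hv /=.
case: x H1 H2 Hv => [[S u] /= /andP [_]]; rewrite inE => /andP [Hu _] H1 H2 _.
by rewrite !inE eqxx Hu andbT eq_sym H2.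
Qed.

Lemma gt_H2 (x : Xt) (r r' : 'I_K) (q q' : Pt) : gt x r = Some q -> gt x r' = Some q' -> r != r' -> ct r q'.
Proof.
case/gtP => H1 _ _; case/gtP => _ _ Hv Hne; by rewrite /ct Hv /= !inE Hne.
Qed.

Lemma gt_H3 (k : 'I_K) (q : Pt) : ~~ ct k q -> exists x, gt x k = Some q.
Proof.
case: q => [[T l] Hq]; rewrite /ct /= => Hk.
have /andP [/eqP HT Hl] := Hq; rewrite /= in HT Hl.
set S := k |: T.
have HS : #|S| = t.+1 by rewrite cardsU1 Hk HT.
have HkS : k \in S by rewrite setU11.
have ST : S :\ k = T by rewrite setU1K.
have HlT : l \in T by move: Hl; rewrite inE => /andP [].
have Hlk : l != k by apply: contraNneq Hk => <-.
suff [u [Hu Hul Hlb]] : exists u, [/\ u \in S :&: side S, u != k & lbl S k u = l].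
  have Hx : pX (S, u) by rewrite /pX /= HS eqxx.
  have Hku : k != (val (Sub (S, u) Hx : Xt)).2 by rewrite /= eq_sym.
  have [q' [Eq Vq]] := gt_some (Sub (S, u) Hx) k HkS Hku.
  exists (Sub (S, u) Hx); rewrite Eq; congr Some; apply: val_inj.
  by rewrite Vq /= ST Hlb.
case: (side_cases S k HS HkS) => [E | [E1 E2 HA Heq]].
  rewrite ST in E.
  exists l; split => //; last by rewrite /lbl ST E eqxx.
  by move: Hl; rewrite -E !inE => /andP [-> ->]; rewrite orbT.
rewrite ST in Heq E2.
have HlA : l \in T :&: Aset by rewrite -E2.
have [u Hu Hr] := rho_surj T Heq l HlA.
exists u; split.
- by move: Hu; rewrite E1 !inE => /andP [-> ->]; rewrite orbT.
- by apply: contraTneq Hu => ->; rewrite !inE (negbTE Hk).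
- by rewrite /lbl ST E1 E2 (negbTE AnotB).
Qed.

Lemma gt_inj (x x' : Xt) (r : 'I_K) (q : Pt) : gt x r = Some q -> gt x' r = Some q -> x = x'.
Proof.
case/gtP => H1 H2 Hv; case/gtP => H1' H2' Hv'.
move: Hv'; rewrite Hv => -[ES El].
case: x H1 H2 Hv ES El => [[S u] Hx]; case: x' H1' H2' => [[S' u'] Hx'] /=.
move=> H1' H2' H1 H2 _ ES El.
have eS : S = S' by rewrite -(setD1K H1) ES setD1K.
subst S'.
have /andP [/eqP HS Hu] := Hx; have /andP [_ Hu'] := Hx'; rewrite /= in HS Hu Hu'.
suff eu : u = u' by subst u'; congr exist; apply: bool_irrelevance.
move: El; rewrite /lbl.
case: (side_cases S r HS H1) => [E | [E1 E2 HA Heq]]; first by rewrite E eqxx.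
rewrite E1 E2 (negbTE AnotB) => /rho_inj; apply => //.
  by move: Hu; rewrite E1 !inE eq_sym H2 => /andP [-> ->].
by move: Hu'; rewrite E1 !inE eq_sym H2' => /andP [-> ->].
Qed.

Lemma gt_recv (x : Xt) : #|[set r | gt x r != None]| = t.
Proof.
have -> : [set r | gt x r != None] = (val x).1 :\ (val x).2.
  apply/setP => r; rewrite !inE.
  case H1: (r \in (val x).1); last by rewrite /gt H1 andbF.
  case H2: (r == (val x).2); first by rewrite /gt H1 H2.
  have [q [-> _]] := gt_some x r H1 (negbT H2); by [].
case: x => [[S u] /andP [/eqP HS Hu]] /=.
by rewrite cardD1' ?HS //; move: Hu; rewrite inE => /andP [].
Qed.

Lemma ct_card (q : Pt) : #|[set k | ct k q]| = t.
Proof.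
rewrite /ct; case: q => [[T l] /andP [/eqP HT _]] /=.
by rewrite -HT; apply: eq_card => k; rewrite inE.
Qed.

Definition w (T : {set 'I_K}) := #|T :&: side T|.

Lemma card_sumP (U : finType) (p : pred U) : #|[set x | p x]| = \sum_x (p x : nat).
Proof. by rewrite -sum1_card big_mkcond /=; apply: eq_bigr => x _; rewrite inE; case: (p x). Qed.

Lemma cardPt_Q (Q : pred {set 'I_K}) :
  #|[set q : Pt | Q (val q).1]| = \sum_(T : {set 'I_K} | (#|T| == t) && Q T) w T.
Proof.
have -> : #|[set q : Pt | Q (val q).1]| = #|[set y | pP y && Q y.1]|.
  rewrite -(card_imset _ val_inj); apply: eq_card => y; rewrite inE.
  apply/imsetP/idP => [[q]|/andP [Hy HQ]].
    by rewrite inE => HQ ->; rewrite (valP q) HQ.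
  by exists (Sub y Hy); rewrite ?inE ?SubK.
rewrite card_sumP.
rewrite -(pair_big xpredT xpredT (fun (T : {set 'I_K}) (u : 'I_K) => (pP (T, u) && Q T : nat))) /=.
rewrite [RHS]big_mkcond /=; apply: eq_bigr => T _.
rewrite /pP /=; case: (#|T| == t) => /=; last by rewrite big1.
case: (Q T) => /=; last by rewrite big1 // => u _; rewrite andbF.
by rewrite /w card_sumP; apply: eq_bigr => u _; rewrite andbT inE.
Qed.

Lemma cardPt : #|{: Pt}| = \sum_(T : {set 'I_K} | #|T| == t) w T.
Proof.
have -> : #|{: Pt}| = #|[set q : Pt | xpredT (val q).1]|.
  by apply: eq_card => q; rewrite !inE.
rewrite (cardPt_Q xpredT); apply: eq_bigl => T; by rewrite andbT.
Qed.

Lemma w_min T : w T = minn #|T :&: Aset| #|T :&: ~: Aset|.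
Proof.
rewrite /w /side /minn; set a := #|T :&: Aset|; set b := #|T :&: ~: Aset|.
by case: (leqP a b) => H1; case: (ltnP a b) => H2 //; apply/eqP; rewrite eqn_leq; apply/andP; split; lia.
Qed.

Lemma card_imsetI (sg : 'I_K -> 'I_K) (inj : injective sg) (X Y T : {set 'I_K}) :
  (forall x, (sg x \in Y) = (x \in X)) -> #|sg @: T :&: Y| = #|T :&: X|.
Proof.
move=> H; have -> : sg @: T :&: Y = sg @: (T :&: X).
  apply/setP => y; rewrite !inE; apply/andP/imsetP.
    case=> /imsetP [x Hx ->] HY; exists x => //; by rewrite inE Hx -H HY.
  case=> x; rewrite inE => /andP [Hx HX] ->; split; first exact: imset_f.
  by rewrite H.
by rewrite card_imset.
Qed.

Lemma w_inv (sg : 'I_K -> 'I_K) (inj : injective sg)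
  (Hs : (forall x, (sg x \in Aset) = (x \in Aset)) \/ (forall x, (sg x \in Aset) = (x \notin Aset)))
  (T : {set 'I_K}) : w (sg @: T) = w T.
Proof.
rewrite !w_min; case: Hs => H.
  have H' : forall x, (sg x \in ~: Aset) = (x \in ~: Aset) by move=> x; rewrite !in_setC H.
  by rewrite (card_imsetI _ inj Aset Aset) // (card_imsetI _ inj (~: Aset) (~: Aset)).
have H1 : forall x, (sg x \in Aset) = (x \in ~: Aset) by move=> x; rewrite !in_setC H.
have H2 : forall x, (sg x \in ~: Aset) = (x \in Aset) by move=> x; rewrite !in_setC H negbK.
by rewrite (card_imsetI _ inj (~: Aset) Aset) // (card_imsetI _ inj Aset (~: Aset)) // minnC.
Qed.

Definition fk (k : 'I_K) := \sum_(T : {set 'I_K} | (#|T| == t) && (k \in T)) w T.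

Lemma fk_inv (sg : 'I_K -> 'I_K) (inj : injective sg)
  (Hs : (forall x, (sg x \in Aset) = (x \in Aset)) \/ (forall x, (sg x \in Aset) = (x \notin Aset)))
  k : fk (sg k) = fk k.
Proof.
rewrite /fk (reindex_inj (imset_inj inj)) /=; apply: eq_big => T.
  by rewrite card_imset // mem_imset.
by move=> _; apply: w_inv.
Qed.

Definition sw (a b x : 'I_K) := if x == a then b else if x == b then a else x.
Lemma swK a b : involutive (sw a b).
Proof.
move=> x; rewrite /sw; case: (eqVneq x a) => [->|Ha].
  by rewrite eqxx; case: (eqVneq b a) => [->|Hb] //; rewrite eqxx.
case: (eqVneq x b) => [->|Hb]; first by rewrite eqxx.
by rewrite (negbTE Ha) (negbTE Hb).
Qed.
Lemma sw_same a b : (a \in Aset) = (b \in Aset) -> forall x, (sw a b x \in Aset) = (x \in Aset).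
Proof.
move=> E x; rewrite /sw; case: (eqVneq x a) => [->|_] //.
by case: (eqVneq x b) => [->|_].
Qed.

Definition s0 (x : 'I_K) : 'I_K := insubd x (if (x < h)%N then x + h else x - h).
Lemma s0_val x : val (s0 x) = if (x < h)%N then x + h else x - h.
Proof.
rewrite /s0 insubdK // -topredE /=; have := ltn_ord x.
case: ifP => H; lia.
Qed.
Lemma s0_inj : injective s0.
Proof.
move=> x y E; apply: ord_inj; have := congr1 val E; rewrite !s0_val.
have := ltn_ord x; have := ltn_ord y.
case: ifP => Hx; case: ifP => Hy; lia.

Qed.
Lemma s0_swap x : (s0 x \in Aset) = (x \notin Aset).
Proof.
rewrite !inE s0_val; have := ltn_ord x.
case: ifP => Hx => Hlt /=; apply/idP; lia.
Qed.

Lemma fk_const k k' : fk k = fk k'.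
Proof.
wlog E : k / (k \in Aset) = (k' \in Aset).
  move=> W; case: (boolP ((k \in Aset) == (k' \in Aset))) => [/eqP|H]; first exact: W.
  rewrite -(fk_inv s0 s0_inj (or_intror s0_swap)); apply: W.
  by rewrite s0_swap; move: H; case: (k \in Aset); case: (k' \in Aset).
have -> : k' = sw k k' k by rewrite /sw eqxx.
by rewrite (fk_inv (sw k k') (can_inj (swK k k')) (or_introl (sw_same k k' E))).
Qed.

Lemma cache_eq k : K * #|[set q : Pt | ct k q]| = t * #|{: Pt}|.
Proof.
have E1 : forall k, #|[set q : Pt | ct k q]| = fk k.
  by move=> k'; rewrite /ct (cardPt_Q (fun T => k' \in T)).
have E2 : \sum_(k' < K) #|[set q : Pt | ct k' q]| = t * #|{: Pt}|.
  under eq_bigr => k' _ do rewrite card_sumP.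
  rewrite exchange_big /= mulnC -sum1_card big_distrl /=; apply: eq_bigr => q _.
  by rewrite mul1n -card_sumP ct_card.
rewrite -E2 E1; under eq_bigr => k' _ do rewrite E1 (fk_const k' k).
by rewrite sum_nat_const card_ord.
Qed.

Lemma w_le (T : {set 'I_K}) : #|T| = t -> w T <= s.
Proof.
move=> HT; rewrite w_min; have := cardAB T; rewrite HT Ht.
set a := #|T :&: Aset|; set b := #|T :&: ~: Aset|; move=> E.
rewrite /minn; case: ifP => Hab; lia.
Qed.

Lemma cardPt_le : #|{: Pt}| <= s * 'C(K, t).
Proof.
rewrite cardPt; apply: (@leq_trans (\sum_(T : {set 'I_K} | #|T| == t) s)).
  by apply: leq_sum => T /eqP; apply: w_le.
rewrite (eq_bigl (fun T => T \in [set T : {set 'I_K} | #|T| == t])); last by move=> T; rewrite inE.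
by rewrite sum_nat_const card_draws card_ord mulnC.
Qed.

Lemma extend_set (A0 : {set 'I_K}) m : #|A0| + m <= K ->
  exists T : {set 'I_K}, (A0 \subset T) && (#|T| == #|A0| + m).
Proof.
elim: m => [|m IH] H; first by exists A0; rewrite subxx addn0 eqxx.
have H' : #|A0| + m <= K by lia.
have [T /andP [HsT /eqP HT]] := IH H'.
have : ~: T != set0.
  rewrite -card_gt0; have := cardsC T; rewrite card_ord HT; lia.
case/set0Pn => x; rewrite inE => Hx.
exists (x |: T); rewrite cardsU1 Hx HT (subset_trans HsT) ?subsetUr //=.
by rewrite addnS add1n.
Qed.

Lemma Pt_pos : 2 <= t -> t <= K -> 0 < #|{: Pt}|.
Proof.
move=> H2 HtK.
have h0 : (0 < K)%N by rewrite HK; lia.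
set a0 := Ordinal h0.
have Ha0 : a0 \in Aset by rewrite inE.
have Hb0 : s0 a0 \notin Aset by rewrite s0_swap negbK.
have Hne : a0 != s0 a0 by apply: contraNneq Hb0 => <-.
have Hc : #|[set a0; s0 a0]| + (t - 2) <= K by rewrite cards2 Hne; lia.
have [T /andP [HsT /eqP HT]] := extend_set [set a0; s0 a0] (t - 2) Hc.
rewrite cards2 Hne in HT.
have HTt : #|T| = t by rewrite HT; lia.
have Hw : 0 < w T.
  rewrite w_min leq_min; apply/andP; split; rewrite card_gt0; apply/set0Pn.
    by exists a0; rewrite inE Ha0 andbT (subsetP HsT) // !inE eqxx.
  by exists (s0 a0); rewrite inE in_setC Hb0 andbT (subsetP HsT) // !inE eqxx orbT.
rewrite cardPt (bigD1 T) ?HTt //=; exact: leq_trans Hw (leq_addr _ _).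
Qed.
End Inst.
From mathcomp Require Import ring.

Theorem theorem2 (N K t : nat) (M : rat) :
  (1 <= N)%N -> (2 <= K)%N ->
  (0 < M)%R -> (M <= N%:R)%R ->
  (K%:R * M / N%:R = t%:R :> rat)%R ->
  ~~ odd K -> ~~ odd t -> (2 <= t)%N -> (t <= K)%N ->
  exists F : nat,
    (F%:R <= (F_JCM K t)%:R / 2 :> rat)%R /\
    achievable_with N K M (N%:R / M - 1)%R F.
Proof.
move=> HN HK2 HM0 HMN HKM oK ot Ht2 HtK.
set h := K./2; set s := t./2.
have HK : K = h + h by rewrite addnn even_halfK.
have Ht : t = s + s by rewrite addnn even_halfK.
have Hh : (0 < h)%N by lia.
set P := Pt K t h; set X := Xt K t h.
have HKr : (K%:R : rat) != 0%R by rewrite pnatr_eq0 -lt0n; lia.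
have HNr : (N%:R : rat) != 0%R by rewrite pnatr_eq0 -lt0n; lia.
have HtR : (t%:R : rat) != 0%R by rewrite pnatr_eq0 -lt0n; lia.
have EM : M = (t%:R * N%:R / K%:R)%R.
  by rewrite -HKM; field; apply/andP; split.
have HPpos := Pt_pos K t h s HK Ht Hh Ht2 HtK.
have HFr : (#|{: P}|%:R : rat) != 0%R by rewrite pnatr_eq0 -lt0n.
exists #|{: P}|; split.
  have -> : F_JCM K t = (s * 'C(K, t)) * 2.
    by rewrite /F_JCM; set C := 'C(K, t); lia.
  rewrite natrM mulfK ?pnatr_eq0 //.
  by rewrite ler_nat (cardPt_le K t h s HK Ht Hh).
split => // b _.
have Hc : forall k : 'I_K,
    (((N * #|[set q | ct K t h k q]|)%:R : rat) <= (M * #|{: P}|%:R : rat))%R.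
  move=> k; rewrite le_eqVlt; apply/orP; left; apply/eqP.
  have E := cache_eq K t h s HK Ht Hh k.
  have ER : (K%:R * #|[set q | ct K t h k q]|%:R = t%:R * #|{: P}|%:R :> rat)%R.
    by rewrite -!natrM E.
  rewrite EM natrM; apply: (mulfI HKr).
  rewrite mulrCA ER; field; exact: HKr.
have [S ES] := generic_rate N K M P X (ct K t h) (sndt K t h) (gt K t h) (@gt_H1 K t h) (@gt_H2 K t h) (gt_H3 K t h s HK Ht Hh) Hc b HN.
exists S; rewrite ES.
have EX := count_XP K P X (ct K t h) (sndt K t h) (gt K t h) (@gt_H1 K t h) (gt_H3 K t h s HK Ht Hh) t (gt_recv K t h s HK Ht Hh) (@ct_card K t h) (gt_inj K t h s HK Ht Hh).
have EXR : (t%:R * #|{: X}|%:R = (K%:R - t%:R) * #|{: P}|%:R :> rat)%R.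
  by rewrite -natrM EX natrM natrB.
rewrite EM; apply: (mulfI HtR); rewrite mulrA EXR; field.
by rewrite HtR HNr HKr HFr.
Qed.
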